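(* Suppose $0<\delta < \pi/g$. Then for every $\vec \theta \in R_{\delta}^B$ we have $|\Phi(\vec \theta)| \leq 1 - \frac{11}{48} g^{-k} \left( \frac{\delta}{2} \right)^2$.
   Context: Let $g\ge 2$, $k\ge 2$ be integers, $\mathbb Z_g$ the integers mod $g$, and $d=\binom{k}{2}(g-1)$. Index the coordinates of $\mathbb R^d$ by pairs $(\{i,j\},a)$ with $1\le i<j\le k$ and $a\in\mathbb Z_g\setminus\{0\}$. Define $Z:(\mathbb Z_g)^k\to\mathbb R^d$ by $[Z(\vec x)]_{\{i,j\},a}=1-1/g$ if $x_i-x_j=a$ and $-1/g$ otherwise. Define $\Phi(\vec\theta)=\sum_{\vec x\in(\mathbb Z_g)^k} g^{-k}e^{i\vec\theta\cdot Z(\vec x)}$. For $\vec\theta\in[-\pi,\pi)^d$ and $\delta>0$ let $B_\delta(\vec\theta)=\{\vec\mu\in[-\pi,\pi)^d: \vec\mu\equiv\vec\theta+\vec\zeta \pmod{2\pi}$ componentwise, for some $\vec\zeta$ with $|\zeta_{\{i,j\},a}|<\delta$ for all coordinates$\}$. Let $L=\{\vec\theta\in[-\pi,\pi)^d: \theta_{\{i,j\},a}\equiv 0 \pmod{2\pi/g}$ for all coordinates$\}$ and $R_\delta^B=[-\pi,\pi)^d\setminus\bigcup_{\vec\eta\in L}B_\delta(\vec\eta)$. *)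

(* Defs.v *)
From HB Require Import structures.
From mathcomp Require Import all_boot all_order all_algebra.
From mathcomp Require Import reals trigo.
From mathcomp Require Export complex.
Set Implicit Arguments.
Unset Strict Implicit.
Unset Printing Implicit Defensive.
Import Order.TTheory GRing.Theory Num.Theory.
Local Open Scope ring_scope.

Section Defs.
Variables (R : realType) (g k : nat).

(* A vector of R^d, d = C(k,2)(g-1), is represented as a function of
   (i, j, a) : 'I_k * 'I_k * 'Z_g; only the "valid" coordinates
   (i < j, a != 0), i.e. the pairs ({i,j}, a) of the paper, are ever used. *)
Definition vec := 'I_k -> 'I_k -> 'Z_g -> R.

Definition valid (i j : 'I_k) (a : 'Z_g) : bool := (i < j)%N && (a != 0).

Definition Zvec (x : {ffun 'I_k -> 'Z_g}) : vec :=
  fun i j a => if x i - x j == a then 1 - (g%:R)^-1 else - (g%:R)^-1.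

Definition dotv (u v : vec) : R :=
  \sum_(i : 'I_k) \sum_(j : 'I_k | (i < j)%N) \sum_(a : 'Z_g | a != 0)
     u i j a * v i j a.

Definition expi (t : R) : R[i] := (cos t +i* sin t)%C.

Definition Phi (theta : vec) : R[i] :=
  \sum_(x : {ffun 'I_k -> 'Z_g}) ((g%:R ^- k)%:C * expi (dotv theta (Zvec x)))%C.

Definition inbox (theta : vec) : Prop :=
  forall i j a, valid i j a -> - pi <= theta i j a < pi.

Definition inB (delta : R) (eta mu : vec) : Prop :=
  inbox mu /\
  exists zeta : vec,
    (forall i j a, valid i j a -> `|zeta i j a| < delta) /\
    (forall i j a, valid i j a ->
       exists n : int, mu i j a = eta i j a + zeta i j a + n%:~R * (2 * pi)).

Definition inL (eta : vec) : Prop :=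
  inbox eta /\
  forall i j a, valid i j a ->
    exists m : int, eta i j a = m%:~R * (2 * pi / g%:R).

Definition inRB (delta : R) (theta : vec) : Prop :=
  inbox theta /\ forall eta : vec, inL eta -> ~ inB delta eta theta.

End Defs.

(* Main.v *)
Require Import Defs.
From HB Require Import structures.
From mathcomp Require Import all_boot all_order all_algebra.
From mathcomp Require Import reals trigo complex.
From mathcomp Require Import boolp topology normedtype sequences.
From mathcomp Require Import lra ring zify.
From Stdlib Require Import IndefiniteDescription.
Import Order.TTheory GRing.Theory Num.Theory.
Import numFieldNormedType.Exports.
Local Open Scope ring_scope.

Lemma cos_quartic (R : realType) (x : R) : 0 < x -> x <= 1 ->
  cos x < 1 - x ^+ 2 / 2 + x ^+ 4 / 24.
Proof.
move=> x0 x1.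
rewrite -(opprK (cos x)) ltrNl; have /cvgN h := @cvg_cos_coeff' R x.
rewrite -(cvg_lim (@Rhausdorff R) h).
have -> : - (1 - x ^+ 2 / 2 + x ^+ 4 / 24) = \sum_(0 <= i < 3) - cos_coeff' x i.
  do 3 rewrite big_nat_recl//; rewrite big_nil addr0 /cos_coeff'.
  rewrite !double0 /=.
  rewrite !expr0z expr1z.
  rewrite (_ : (-1) ^ 2%Z = 1 :> R); last by rewrite -exprnP sqrrN expr1n.
  rewrite (_ : (1.*2)`! = 2)%N // (_ : (2.*2)`! = 24)%N // fact0.
  by field.
rewrite -seriesN lt_sum_lim_series //.
  by move/cvgP in h; by rewrite seriesN.
move=> d.
rewrite /cos_coeff' -!exprnP.
rewrite -[(-1) ^+ (3 + _)]signr_odd -[(-1) ^+ (3 + d.*2.+1)]signr_odd.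
rewrite !oddD odd_double /= negbK odd_double expr1 expr0 !mul1r mulN1r mulNr opprK.
rewrite addnS doubleS; set m := (3 + d.*2).*2.
rewrite subr_gt0.
have xm : 0 < x ^+ m by rewrite exprn_gt0.
have f0 : 0 < (m`!%:R : R) by rewrite ltr0n fact_gt0.
have f2 : (m`!%:R : R) < (m.+2)`!%:R.
  by rewrite ltr_nat ltn_pfact // /m double_gt0.
apply: (le_lt_trans (y := x ^+ m / (m.+2)`!%:R)).
  rewrite ler_pM2r ?invr_gt0 ?(lt_trans f0) // exprSr exprSr -mulrA.
  by apply: ler_piMr; [rewrite ltW | rewrite mulr_ile1 // ltW].
rewrite (ltr_pM2l xm) ltf_pV2 ?posrE //; exact: lt_trans f0 f2.

Qed.

Lemma cosDz (R : realType) (D : R) (n : int) : cos (D + n%:~R * (pi *+ 2)) = cos D.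
Proof.
case: n => m.
  by rewrite -pmulrn mulr_natl (periodicn (@cosD2pi R)).
rewrite NegzE mulrNz mulNr mulr_natl -[in RHS](subrK ((pi *+ 2) *+ m.+1) D).
by rewrite (periodicn (@cosD2pi R)).
Qed.

Lemma near_lattice (R : realType) (s D : R) : 0 < s -> s <= pi -> cos s < cos D ->
  exists n : int, `|D - n%:~R * (pi *+ 2)| < s.
Proof.
move=> s0 spi hc.
have p0 := @pi_gt0 R.
have p20 : 0 < pi *+ 2 :> R by rewrite pmulrn_lgt0.
pose n := Num.floor ((D + pi) / (pi *+ 2)).
exists n.
have h1 := floor_le ((D + pi) / (pi *+ 2)).
have h2 := floorD1_gt ((D + pi) / (pi *+ 2)).
rewrite -/n in h1 h2.
rewrite ler_pdivlMr // in h1.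
rewrite ltr_pdivrMr // intrD mulrDl mul1r in h2.
have he : `|D - n%:~R * (pi *+ 2)| <= pi.
  rewrite ler_norml; apply/andP; split; rewrite mulr2n in h1 h2 *; lra.
rewrite -ltr_cos ?in_itv /= ?(ltW s0) ?spi ?normr_ge0 ?he //.
rewrite cos_norm (_ : D - _ = D + (- n)%:~R * (pi *+ 2)); last by rewrite mulrNz mulNr.
by rewrite cosDz.
Qed.

Lemma norm_expi (R : realType) (t : R) : `|expi t| = 1.
Proof. by rewrite normc_def /= cos2Dsin2 sqrtr1. Qed.

Lemma aux (R : realFieldType) (t c : R) : t <= 1 - 2 * c -> 1 + 1 + 2 * t <= (2 - c) ^+ 2.
Proof. move=> h; have := sqr_ge0 c; rewrite sqrrB; move: (c ^+ 2) => c2 hc2; rewrite expr2 mulr2n; lra. Qed.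

Lemma norm_pair (R : realType) (a b c : R) : 0 <= c -> c <= 1 ->
  cos (a - b) <= 1 - 2 * c -> `|expi a + expi b| <= (2 - c)%:C%C.
Proof.
move=> c0 c1 hc.
have key : (cos a + cos b) ^+ 2 + (sin a + sin b) ^+ 2 <= (2 - c) ^+ 2.
  rewrite cosB in hc.
  have -> : (cos a + cos b) ^+ 2 + (sin a + sin b) ^+ 2 =
    (cos a ^+ 2 + sin a ^+ 2) + (cos b ^+ 2 + sin b ^+ 2) + 2 * (cos a * cos b + sin a * sin b) by ring.
  by rewrite !cos2Dsin2; apply: aux.
have h2 : 0 <= 2 - c by lra.
rewrite normc_def /= lecR.
by rewrite -(ger0_norm h2) -sqrtr_sqr ler_sqrt ?sqr_ge0.
Qed.

Lemma sum2 (V : zmodType) (X : finType) (x y : X) (F : X -> V) : x != y ->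
  \sum_z F z = F x + (F y + \sum_(z | (z != x) && (z != y)) F z).
Proof.
move=> xy; have yx : y != x by rewrite eq_sym.
by rewrite (bigD1 x) //= (bigD1 y) //=.
Qed.

Lemma phi_bound (R : realType) (X : finType) (w c : R) (h : X -> R) (x y : X) :
  x != y -> 0 <= w -> 0 <= c -> c <= 1 -> cos (h x - h y) <= 1 - 2 * c ->
  `|\sum_z ((w%:C)%C * expi (h z))| <= ((\sum_(z : X) w) - w * c)%:C%C.
Proof.
move=> xy w0 c0 c1 hc.
rewrite (sum2 _ _ _ _ _ xy) (sum2 _ _ _ _ (fun _ => w) xy).
rewrite addrA; apply: le_trans (ler_normD _ _) _.
have wC : `|(w%:C)%C| = (w%:C)%C by rewrite ger0_norm // ler0c.
rewrite -mulrDr normrM wC.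
set S := \sum_(i | _) w.
apply: (le_trans (y := (w * (2 - c))%:C%C + (S%:C)%C)).
  apply: lerD.
    rewrite rmorphM; apply: ler_wpM2l; [by rewrite ler0c | exact: norm_pair].
  apply: le_trans (ler_norm_sum _ _ _) _.
  rewrite /S rmorph_sum /=; apply: ler_sum => z _.
  by rewrite normrM wC norm_expi mulr1.
rewrite -rmorphD lecR.
suff -> : w * (2 - c) + S = w + (w + S) - w * c by [].
ring.
Qed.

Section Alg.
Variables (R : realType) (g k : nat).
Implicit Types (t : vec R g k).

Lemma dotvB t (u w : vec R g k) : dotv t u - dotv t w = dotv t (fun p q b => u p q b - w p q b).
Proof.
rewrite /dotv -sumrB; apply: eq_bigr => p _; rewrite -sumrB; apply: eq_bigr => q _.
rewrite -sumrB; apply: eq_bigr => b _; by rewrite mulrBr.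
Qed.

Lemma dotvD t (u w : vec R g k) : dotv t u + dotv t w = dotv t (fun p q b => u p q b + w p q b).
Proof.
rewrite /dotv -big_split; apply: eq_bigr => p _; rewrite -big_split; apply: eq_bigr => q _.
rewrite -big_split; apply: eq_bigr => b _; by rewrite mulrDr.
Qed.

Lemma dotv_sum (I : finType) t (F : I -> vec R g k) :
  \sum_(z : I) dotv t (F z) = dotv t (fun p q b => \sum_(z : I) F z p q b).
Proof.
rewrite /dotv exchange_big; apply: eq_bigr => p _; rewrite exchange_big.
apply: eq_bigr => q _; rewrite exchange_big; apply: eq_bigr => b _.
by rewrite mulr_sumr.
Qed.

Lemma ZvecE (x : {ffun 'I_k -> 'Z_g}) p q b :
  Zvec R x p q b = (x p - x q == b)%:R - (g%:R)^-1.
Proof. by rewrite /Zvec; case: (x p - x q == b); rewrite /= ?sub0r. Qed.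

Definition XX (i j : 'I_k) (u v : 'Z_g) : {ffun 'I_k -> 'Z_g} :=
  [ffun l => if l == i then u else if l == j then v else 0].

Lemma XX1 i j u v l : l != j -> XX i j u v l = XX i j u 0 l.
Proof. by move=> lj; rewrite !ffunE (negbTE lj); case: (l == i). Qed.

Lemma XX2 i j u v l : l != i -> XX i j u v l = XX i j 0 v l.
Proof. by move=> li; rewrite !ffunE (negbTE li). Qed.

Lemma sum_eq1 (c : 'Z_g) : \sum_(u : 'Z_g) ((u == c)%:R : R) = 1.
Proof.
rewrite (bigD1 c) //= eqxx big1 ?addr0 // => u /negbTE -> //.
Qed.

Lemma zero_term (i j : 'I_k) (v z : 'Z_g) p q b :
  ((p != i) && (q != i)) || ((p != j) && (q != j)) ->
  Zvec R (XX i j z v) p q b - Zvec R (XX i j z 0) p q b -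
  Zvec R (XX i j 0 v) p q b + Zvec R (XX i j 0 0) p q b = 0.
Proof.
rewrite !ZvecE; case/orP => /andP[h1 h2].
  rewrite (XX2 _ _ z v _ h1) (XX2 _ _ z v _ h2) (XX2 _ _ z 0 _ h1) (XX2 _ _ z 0 _ h2); ring.
rewrite (XX1 _ _ z v _ h1) (XX1 _ _ z v _ h2) (XX1 _ _ 0 v _ h1) (XX1 _ _ 0 v _ h2); ring.
Qed.

Lemma card_Zg (hg : (2 <= g)%N) : #|'Z_g| = g.
Proof. by rewrite card_ord Zp_cast. Qed.

Lemma S_val (hg : (2 <= g)%N) (i j : 'I_k) (v b : 'Z_g) : j != i -> b != 0 ->
  \sum_(z : 'Z_g) (Zvec R (XX i j z v) i j b - Zvec R (XX i j z 0) i j b -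
  Zvec R (XX i j 0 v) i j b + Zvec R (XX i j 0 0) i j b) = - (g%:R * ((- v == b)%:R)).
Proof.
move=> ji b0.
rewrite (eq_bigr (fun z => ((z == b + v)%:R - (z == b)%:R - ((- v == b)%:R : R)))); last first.
  move=> z _; rewrite !ZvecE !ffunE !eqxx (negbTE ji) subrr (eq_sym 0 b) (negbTE b0).
  rewrite subr_eq subr0 sub0r (_ : (false%:R : R) = 0) //; ring.
rewrite !sumrB !sum_eq1 sumr_const card_Zg //.
by rewrite subrr sub0r mulr_natl.
Qed.

Lemma key_identity (hg : (2 <= g)%N) t (i j : 'I_k) (v : 'Z_g) :
  (i < j)%N -> v != 0 ->
  \sum_(u : 'Z_g) (dotv t (Zvec R (XX i j u v)) - dotv t (Zvec R (XX i j u 0))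
                 - dotv t (Zvec R (XX i j 0 v)) + dotv t (Zvec R (XX i j 0 0)))
  = - (g%:R * t i j (- v)).
Proof.
move=> ij v0.
have ji : j != i by rewrite neq_ltn ij orbT.
under eq_bigr => u _ do rewrite !dotvB dotvD.
rewrite dotv_sum /dotv.
rewrite (bigD1 i) //= [X in _ + X]big1 ?addr0; last first.
  move=> p pi; apply: big1 => q pq; apply: big1 => b _.
  rewrite big1 ?mulr0 // => z _; apply: zero_term.
  case: (boolP (q == i)) => [/eqP qi|qi]; last by apply/orP; left; apply/andP.
  apply/orP; right; rewrite qi (eq_sym i j) ji andbT neq_ltn.
  by apply/orP; left; apply: ltn_trans pq _; rewrite qi.
rewrite (bigD1 j) //= [X in _ + X]big1 ?addr0; last first.
  move=> q /andP[iq qj]; apply: big1 => b _.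
  rewrite big1 ?mulr0 // => z _; apply: zero_term.
  by apply/orP; right; apply/andP; split => //; rewrite eq_sym.
rewrite (bigD1 (- v)) ?oppr_eq0 //= [X in _ + X]big1 ?addr0; last first.
  move=> b /andP[b0 bv]; rewrite S_val // eq_sym (negbTE bv) mulr0 oppr0 mulr0 //.
by rewrite S_val ?oppr_eq0 // eqxx mulr1 mulrN mulrC.
Qed.
End Alg.

Lemma reduce (g : nat) (N : int) : (0 < g)%N ->
  exists p : int * int, N = p.1 + p.2 * g%:Z /\ - (g%:Z) <= 2 * p.1 /\ 2 * p.1 < g%:Z.
Proof.
move=> g0.
have e := divz_eq N g%:Z.
have h0 : 0 <= (N %% g%:Z)%Z by rewrite modz_ge0 //; lia.
have h1 : (N %% g%:Z)%Z < g%:Z by rewrite ltz_pmod // ltz_nat.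
case: (boolP (2 * (N %% g%:Z)%Z < g%:Z)) => h.
  exists ((N %% g%:Z)%Z, (N %/ g%:Z)%Z) => /=; split; first by rewrite addrC.
  by split => //; lia.
exists ((N %% g%:Z)%Z - g%:Z, (N %/ g%:Z)%Z + 1) => /=; split; last by lia.
by rewrite {1}e; ring.
Qed.

Lemma box_bound (R : realType) (g : nat) (m : int) : (0 < g)%N ->
  - (g%:Z) <= 2 * m -> 2 * m < g%:Z -> (- pi : R) <= m%:~R * (2 * pi / g%:R) < (pi : R).
Proof.
move=> g0 h1 h2.
have p0 := @pi_gt0 R.
have G0 : 0 < (g%:R : R) by rewrite ltr0n.
have H1 : - (g%:R) <= 2 * (m%:~R : R).
  by have := h1; rewrite -(ler_int R) rmorphN rmorphM.
have H2 : 2 * (m%:~R : R) < g%:R.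
  by have := h2; rewrite -(ltr_int R) rmorphM.
set y := (m%:~R : R) in H1 H2 *.
have -> : y * (2 * pi / g%:R) = (2 * y / g%:R) * pi by ring.
have z1 : -1 <= 2 * y / g%:R by rewrite ler_pdivlMr // mulN1r.
have z2 : 2 * y / g%:R < 1 by rewrite ltr_pdivrMr // mul1r.
move: z1 z2; move: (2 * y / g%:R) => z z1 z2.
apply/andP; split; nra.
Qed.

Theorem lemma3p2 (R : realType) (g k : nat) (hg : (2 <= g)%N) (hk : (2 <= k)%N)
  (delta : R) (hd0 : 0 < delta) (hd1 : delta < pi / g%:R)
  (theta : vec R g k) :
  inRB delta theta ->
  `|Phi theta| <= ((1 - 11%:R / 48%:R * (g%:R ^- k) * (delta / 2%:R) ^+ 2 : R)%:C)%C.
Proof.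
move=> [inb hRB].
pose f x := dotv theta (Zvec R x).
pose s := delta / 2.
have p0 := @pi_gt0 R.
have p4 : pi < 4 :> R by have := @pihalf_lt2 R; lra.
have g0 : 0 < (g%:R : R) by rewrite ltr0n; lia.
have g2 : 2 <= (g%:R : R) by rewrite ler_nat.
have dpi : delta < pi / 2.
  apply: lt_le_trans hd1 _; rewrite ler_pM2l // lef_pV2 ?posrE //; lra.
have s0 : 0 < s by rewrite /s; lra.
have s1 : s <= 1 by rewrite /s; lra.
have hcs := @cos_quartic R s s0 s1.
have s2 : s ^+ 2 <= 1 by rewrite expr_le1 // ltW.
have cosb : cos s <= 1 - 2 * (11 / 48 * s ^+ 2).
  have e4 : s ^+ 4 = s ^+ 2 * s ^+ 2 by rewrite -exprD.
  have t4 : s ^+ 4 <= s ^+ 2 by rewrite e4 ler_piMr ?sqr_ge0.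
  have t0 : 0 <= s ^+ 2 by rewrite sqr_ge0.
  move: hcs t4 t0; move: (s ^+ 4) (s ^+ 2) => a b; lra.
have w0 : 0 <= (g%:R ^- k : R) by rewrite invr_ge0 exprn_ge0 // ltW.
have sumw : \sum_(x : {ffun 'I_k -> 'Z_g}) (g%:R ^- k : R) = 1.
  rewrite sumr_const card_ffun !card_ord Zp_cast // -[_ *+ _]mulr_natr natrX mulVf //.
  by rewrite expf_neq0 // gt_eqF.
case: (boolP [exists x, exists y, cos (f x - f y) <= cos s]).
  case/existsP => x /existsP [y hxy].
  have xy : x != y.
    apply: contraTneq hxy => ->; rewrite subrr cos0 -ltNge.
    have st : 0 < s ^+ 2 by rewrite exprn_gt0.
    by move: cosb st; move: (s ^+ 2) => t; lra.
  have t0 := sqr_ge0 s.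
  have c0 : 0 <= 11 / 48 * s ^+ 2 :> R by move: t0; move: (s ^+ 2) => t; lra.
  have c1 : 11 / 48 * s ^+ 2 <= 1 :> R by move: s2; move: (s ^+ 2) => t; lra.
  have := @phi_bound R _ (g%:R ^- k) (11 / 48 * s ^+ 2) f x y xy w0 c0 c1 (le_trans hxy cosb).
  rewrite sumw /Phi => hb; apply: le_trans hb _.
  rewrite lecR /s le_eqVlt; apply/orP; left; apply/eqP; ring.
move=> hne.
have hall : forall x y, cos s < cos (f x - f y).
  move=> x y; rewrite ltNge; apply: contraNN hne => h.
  by apply/existsP; exists x; apply/existsP; exists y.
exfalso.
have pge2 := @pi_ge2 R.
have nl : forall x y, exists n : int, `|f x - f y - n%:~R * (pi *+ 2)| < s.
  by move=> x y; apply: near_lattice; [exact: s0 | lra | exact: hall].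
pose nn x y := proj1_sig (constructive_indefinite_description _ (nl x y)).
have nnP : forall x y, `|f x - f y - (nn x y)%:~R * (pi *+ 2)| < s.
  by move=> x y; exact: (proj2_sig (constructive_indefinite_description _ (nl x y))).
have g0n : (0 < g)%N by exact: ltnW hg.
have hN : forall i j a, valid i j a ->
    exists N : int, `|theta i j a - N%:~R * (2 * pi / g%:R)| < delta.
  move=> i j a /andP[ij a0].
  have va : - a != 0 by rewrite oppr_eq0.
  have hk0 := @key_identity R g k hg theta i j (- a) ij va.
  rewrite opprK in hk0.
  pose X u v := @XX g k i j u v.
  pose E u := (f (X u (- a)) - f (X u 0) - (nn (X u (- a)) (X u 0))%:~R * (pi *+ 2))
            - (f (X 0 (- a)) - f (X 0 0) - (nn (X 0 (- a)) (X 0 0))%:~R * (pi *+ 2)).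
  pose M : int := \sum_(u : 'Z_g) (nn (X u (- a)) (X u 0) - nn (X 0 (- a)) (X 0 0)).
  have hsum : \sum_(u : 'Z_g) (f (X u (- a)) - f (X u 0) - f (X 0 (- a)) + f (X 0 0))
      = \sum_u E u + M%:~R * (pi *+ 2).
    rewrite /M rmorph_sum /= mulr_suml -big_split /=; apply: eq_bigr => u _.
    rewrite /E rmorphB /=; ring.
  have hk1 : - (g%:R * theta i j a) = \sum_u E u + M%:~R * (pi *+ 2).
    by rewrite -hsum -hk0.
  have hE : `|\sum_u E u| < g%:R * delta.
    apply: le_lt_trans (ler_norm_sum _ _ _) _.
    have -> : g%:R * delta = \sum_(u : 'Z_g) delta.
      by rewrite sumr_const card_Zg // mulr_natl.
    apply: ltr_sum; first by apply/hasP; exists 0 => //; rewrite mem_index_enum.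
    move=> u _; rewrite /E; apply: le_lt_trans (ler_normB _ _) _.
    have := nnP (X u (- a)) (X u 0); have := nnP (X 0 (- a)) (X 0 0).
    rewrite /s; lra.
  exists (- M).
  have ht : theta i j a = - (\sum_u E u + M%:~R * (pi *+ 2)) / g%:R.
    by rewrite -hk1 opprK mulrC mulKf // gt_eqF.
  rewrite ht rmorphN /=.
  have -> : - (\sum_u E u + M%:~R * (pi *+ 2)) / g%:R - - M%:~R * (2 * pi / g%:R)
      = - (\sum_u E u) / g%:R.
    rewrite mulr2n; field; by rewrite (gt_eqF g0).
  by rewrite normrM normrN normfV (gtr0_norm g0) ltr_pdivrMr // mulrC.
have hN' : forall i j a, exists p : int * int, valid i j a ->
    `|theta i j a - (p.1 + p.2 * g%:Z)%:~R * (2 * pi / g%:R)| < delta /\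
    - (g%:Z) <= 2 * p.1 /\ 2 * p.1 < g%:Z.
  move=> i j a; case: (boolP (valid i j a)) => hv; last by exists (0, 0).
  have [N hN1] := hN i j a hv.
  have [p [e hb]] := @reduce g N g0n.
  by exists p => _; rewrite -e.
pose P i j a := proj1_sig (constructive_indefinite_description _ (hN' i j a)).
have PP : forall i j a, valid i j a ->
    `|theta i j a - ((P i j a).1 + (P i j a).2 * g%:Z)%:~R * (2 * pi / g%:R)| < delta /\
    - (g%:Z) <= 2 * (P i j a).1 /\ 2 * (P i j a).1 < g%:Z.
  by move=> i j a; exact: (proj2_sig (constructive_indefinite_description _ (hN' i j a))).
pose eta : vec R g k := fun i j a => ((P i j a).1)%:~R * (2 * pi / g%:R).
apply: (hRB eta).
  split.
    move=> i j a hv; have [_ [b1 b2]] := PP i j a hv.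
    exact: box_bound.
  by move=> i j a hv; exists (P i j a).1.
split => //.
exists (fun i j a => theta i j a - ((P i j a).1 + (P i j a).2 * g%:Z)%:~R * (2 * pi / g%:R)).
split.
  by move=> i j a hv; have [h _] := PP i j a hv.
move=> i j a hv; exists (P i j a).2; rewrite /eta.
rewrite rmorphD rmorphM /=.
field; by rewrite (gt_eqF g0).
Qed.
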